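(* Let $m\in[0,1]$, $n=\sqrt{1-m^2}$, and for $k\in[-\pi,\pi]$ define $\omega(k,m)=\arccos(n\cos k)\in[0,\pi]$, $\omega_{\rm D}=\sqrt{k^2+m^2}$, $v=\partial_k\omega=\frac{n\sin k}{\sin\omega}$, $v_{\rm D}=\frac{k}{\sqrt{k^2+m^2}}$, and $$\alpha(k,m):=\omega_{\rm D}-\omega,\qquad \beta(k,m):=\tfrac12\Big(1-v\,v_{\rm D}-\sqrt{(1-v^2)(1-v_{\rm D}^2)}\Big).$$ Let $0\le\bar k<\pi$. Then for every $m\in[0,1]$, $$\max_{k\in[-\bar k,\bar k]}|\alpha(k,m)|=\max_{k\in\{0,\bar k\}}|\alpha(k,m)|,\qquad \max_{k\in[-\bar k,\bar k]}|\beta(k,m)|=\max_{k\in\{0,\bar k\}}|\beta(k,m)|.$$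
   Context: $\omega$ is the dispersion relation of the one-dimensional Dirac quantum cellular automaton with mass parameter $m$, $\omega_{\rm D}$ the Dirac dispersion relation (Planck units), and $v$, $v_{\rm D}$ the corresponding group velocities. *)

(* Defs.v *)
From Stdlib Require Import Reals Lra.
Open Scope R_scope.

Definition nn (m : R) : R := sqrt (1 - m ^ 2).
Definition omega (k m : R) : R := acos (nn m * cos k).
Definition omegaD (k m : R) : R := sqrt (k ^ 2 + m ^ 2).
(* group velocities, by the paper's explicit formulas (Stdlib: x/0 = 0 at 0/0 points) *)
Definition vel (k m : R) : R := nn m * sin k / sin (omega k m).
Definition velD (k m : R) : R := k / sqrt (k ^ 2 + m ^ 2).

Definition alpha (k m : R) : R := omegaD k m - omega k m.
Definition beta (k m : R) : R :=
  / 2 * (1 - vel k m * velD k m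
         - sqrt ((1 - vel k m ^ 2) * (1 - velD k m ^ 2))).

Definition IsMaxOn (S : R -> Prop) (f : R -> R) (M : R) : Prop :=
  (exists x, S x /\ f x = M) /\ (forall x, S x -> f x <= M).

(* Main.v *)
From Stdlib Require Import Reals Lra Psatz.
From Coquelicot Require Import Coquelicot.
Require Import Defs.
Open Scope R_scope.
From Stdlib Require Import Reals.
Lemma cos_ub_eq a : cos_ub a = 1 - a^2/2 + a^4/24 - a^6/720 + a^8/40320.
Proof. unfold cos_ub, cos_approx. cbn [sum_f_R0]. unfold cos_term.
  rewrite !INR_IZR_INZ.
  change (2*0)%nat with 0%nat. change (2*1)%nat with 2%nat. change (2*2)%nat with 4%nat.
  change (2*3)%nat with 6%nat. change (2*4)%nat with 8%nat.
  replace (Z.of_nat (Factorial.fact 0)) with 1%Z by reflexivity.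
  replace (Z.of_nat (Factorial.fact 2)) with 2%Z by reflexivity.
  replace (Z.of_nat (Factorial.fact 4)) with 24%Z by reflexivity.
  replace (Z.of_nat (Factorial.fact 6)) with 720%Z by reflexivity.
  replace (Z.of_nat (Factorial.fact 8)) with 40320%Z by reflexivity.
  field. Qed.
Lemma sin_lb_eq a : sin_lb a = a - a^3/6 + a^5/120 - a^7/5040.
Proof. unfold sin_lb, sin_approx. cbn [sum_f_R0]. unfold sin_term.
  rewrite !INR_IZR_INZ.
  change (2*0+1)%nat with 1%nat. change (2*1+1)%nat with 3%nat. change (2*2+1)%nat with 5%nat.
  change (2*3+1)%nat with 7%nat.
  replace (Z.of_nat (Factorial.fact 1)) with 1%Z by reflexivity.
  replace (Z.of_nat (Factorial.fact 3)) with 6%Z by reflexivity.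
  replace (Z.of_nat (Factorial.fact 5)) with 120%Z by reflexivity.
  replace (Z.of_nat (Factorial.fact 7)) with 5040%Z by reflexivity.
  field. Qed.

Lemma key_ineq k : 0 <= k -> k <= PI/2 -> cos k * k^2 <= (sin k)^2.
Proof.
  intros h0 h1.
  assert (hp := PI_4).
  assert (hk2 : k <= 2) by lra.
  destruct (SIN k h0 ltac:(lra)) as [hs _].
  destruct (COS k ltac:(lra) h1) as [_ hc].
  rewrite sin_lb_eq in hs. rewrite cos_ub_eq in hc.
  assert (hs' : k - k^3/6 <= sin k).
  { assert (0 <= k^5/120 - k^7/5040).
    { assert (k^7 = k^5 * k^2) by ring. assert (0 <= k^5) by (apply pow_le; lra).
      assert (k^2 <= 4) by nra. nra. }
    lra. }
  assert (hc' : cos k <= 1 - k^2/2 + k^4/24).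
  { assert (0 <= k^6/720 - k^8/40320).
    { assert (k^8 = k^6 * k^2) by ring. assert (0 <= k^6) by (apply pow_le; lra).
      assert (k^2 <= 4) by nra. nra. }
    lra. }
  assert (hpos : 0 <= k - k^3/6) by nra.
  assert (h2 : (k - k^3/6)^2 <= (sin k)^2) by (apply pow_incr; lra).
  assert (h3 : cos k * k^2 <= (1 - k^2/2 + k^4/24) * k^2) by (apply Rmult_le_compat_r; nra).
  assert (h4 : (1 - k^2/2 + k^4/24) * k^2 <= (k - k^3/6)^2).
  { assert (k^2 <= 4) by nra. assert (0 <= k^4) by (apply pow_le; lra). nra. }
  lra.
Qed.

Lemma mono_deriv (f df : R -> R) (a b : R) :
  (forall x, a <= x <= b -> is_derive f x (df x)) ->
  (forall x, a <= x <= b -> 0 <= df x) ->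
  forall x y, a <= x -> x <= y -> y <= b -> f x <= f y.
Proof.
  intros hd hp x y hx hxy hy.
  destruct (Req_dec x y) as [e|ne]; [subst; lra|].
  destruct (MVT_gen f x y df) as [c [hc e]].
  - intros z hz. rewrite Rmin_left in hz by lra. rewrite Rmax_right in hz by lra.
    apply hd; lra.
  - intros z hz. rewrite Rmin_left in hz by lra. rewrite Rmax_right in hz by lra.
    apply continuity_pt_filterlim. apply (ex_derive_continuous (K:=R_AbsRing) (V:=R_NormedModule)).
    eexists. apply hd; lra.
  - rewrite Rmin_left in hc by lra. rewrite Rmax_right in hc by lra.
    assert (0 <= df c) by (apply hp; lra). nra.
Qed.

Lemma final (f : R -> R) (kbar : R) : 0 <= kbar ->
  (forall k, f (-k) = f k) ->
  (forall x y, 0 <= x -> x <= y -> y <= kbar -> f x <= f y) ->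
  IsMaxOn (fun k => - kbar <= k <= kbar) (fun k => Rabs (f k))
    (Rmax (Rabs (f 0)) (Rabs (f kbar))).
Proof.
  intros h0 hev hm. split.
  - unfold Rmax. destruct (Rle_dec _ _).
    + exists kbar. split; [lra|reflexivity].
    + exists 0. split; [lra|reflexivity].
  - intros k hk.
    assert (e : f k = f (Rabs k)).
    { unfold Rabs; destruct (Rcase_abs k); [rewrite hev|]; reflexivity. }
    assert (h1 : f 0 <= f (Rabs k)) by (apply hm; [lra|apply Rabs_pos|unfold Rabs; destruct (Rcase_abs k); lra]).
    assert (h2 : f (Rabs k) <= f kbar) by (apply hm; [apply Rabs_pos|unfold Rabs; destruct (Rcase_abs k); lra|lra]).
    rewrite e. set (x := f (Rabs k)) in *.
    apply Rle_trans with (Rmax (Rabs (f 0)) (Rabs (f kbar))); [|lra].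
    unfold Rabs at 1; destruct (Rcase_abs x).
    + apply Rle_trans with (Rabs (f 0)); [|apply Rmax_l]. unfold Rabs; destruct (Rcase_abs (f 0)); lra.
    + apply Rle_trans with (Rabs (f kbar)); [|apply Rmax_r]. unfold Rabs; destruct (Rcase_abs (f kbar)); lra.
Qed.

Lemma alpha_even k m : alpha (-k) m = alpha k m.
Proof. unfold alpha, omegaD, omega. rewrite cos_neg. f_equal. f_equal. ring. Qed.

Lemma beta_even k m : beta (-k) m = beta k m.
Proof.
  assert (e1 : vel (-k) m = - vel k m).
  { unfold vel, omega. rewrite sin_neg, cos_neg. unfold Rdiv. ring. }
  assert (e2 : velD (-k) m = - velD k m).
  { unfold velD. replace ((-k)^2) with (k^2) by ring. unfold Rdiv. ring. }
  unfold beta. rewrite e1, e2. replace ((- vel k m)^2) with (vel k m ^2) by ring.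
  replace ((- velD k m)^2) with (velD k m ^2) by ring. f_equal. ring.
Qed.

Lemma nn0 : nn 0 = 1.
Proof. unfold nn. replace (1 - 0^2) with 1 by ring. apply sqrt_1. Qed.

Lemma alpha_m0 k : 0 <= k <= PI -> alpha k 0 = 0.
Proof.
  intros hk. unfold alpha, omegaD, omega. rewrite nn0, Rmult_1_l, acos_cos by lra.
  replace (k^2 + 0^2) with (k*k) by ring. rewrite sqrt_square by lra. ring.
Qed.

Lemma beta_m0 k : 0 <= k < PI -> beta k 0 = 0.
Proof.
  intros hk. unfold beta, vel, velD, omega. rewrite nn0.
  replace (acos (1 * cos k)) with k by (rewrite Rmult_1_l, acos_cos; lra).
  replace (k^2 + 0^2) with (k*k) by ring. rewrite sqrt_square by lra.
  destruct (Req_dec k 0) as [e|ne].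
  - subst. rewrite sin_0. unfold Rdiv. replace (1 * 0 * / 0 * (0 * / 0)) with 0 by ring.
    replace ((1 - (1 * 0 * / 0) ^ 2) * (1 - (0 * / 0) ^ 2)) with 1 by ring. rewrite sqrt_1. ring.
  - assert (0 < sin k) by (apply sin_gt_0; lra).
    replace (1 * sin k / sin k) with 1 by (field; lra).
    replace (k / k) with 1 by (field; lra).
    replace ((1 - 1^2) * (1 - 1^2)) with 0 by ring. rewrite sqrt_0. ring.
Qed.

Lemma nn_facts m : 0 < m <= 1 -> 0 <= nn m /\ nn m ^ 2 = 1 - m^2 /\ nn m < 1.
Proof.
  intros hm. unfold nn.
  assert (0 <= 1 - m^2) by nra.
  assert (h0 := sqrt_pos (1 - m^2)). assert (h2 := pow2_sqrt (1 - m^2) H).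
  split; [auto|split; [auto|nra]].
Qed.

Lemma ncos_range m k : 0 < m <= 1 -> -1 < nn m * cos k < 1.
Proof.
  intros hm. destruct (nn_facts m hm) as [h0 [h2 h1]].
  assert (hc := COS_bound k). split; nra.
Qed.

Lemma acos_der x : -1 < x < 1 -> is_derive acos x (-1 / sqrt (1 - x^2)).
Proof.
  intros hx. apply is_derive_Reals.
  apply (derive_pt_eq_1 _ _ _ (derivable_pt_acos x hx)).
  rewrite derive_pt_acos. unfold Rsqr. f_equal. f_equal. ring.
Qed.

Lemma alpha_deriv m k : 0 < m <= 1 ->
  is_derive (fun k => alpha k m) k
    (k / sqrt (k^2 + m^2) - nn m * sin k / sqrt (1 - (nn m * cos k)^2)).
Proof.
  intros hm. unfold alpha, omegaD, omega.
  assert (h1 : is_derive (fun k => sqrt (k^2 + m^2)) k (k / sqrt (k^2 + m^2))).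
  { auto_derive. nra. replace (k*(k*1)+m*(m*1)) with (k^2+m^2) by ring.
    assert (0 < sqrt (k^2+m^2)) by (apply sqrt_lt_R0; nra). field. lra. }
  assert (h2 : is_derive (fun k => acos (nn m * cos k)) k
                 (nn m * sin k / sqrt (1 - (nn m * cos k)^2))).
  { assert (hr := ncos_range m k hm).
    assert (hg : is_derive (fun k => nn m * cos k) k (- (nn m * sin k))).
    { auto_derive. auto. ring. }
    assert (hc := is_derive_comp acos (fun k => nn m * cos k) k _ _ (acos_der _ hr) hg).
    assert (0 < sqrt (1 - (nn m * cos k)^2)) by (apply sqrt_lt_R0; nra).
    replace (nn m * sin k / sqrt (1 - (nn m * cos k)^2)) with
      (scal (- (nn m * sin k)) (-1 / sqrt (1 - (nn m * cos k) ^ 2))); [exact hc|].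
    unfold scal; simpl; unfold mult; simpl. unfold Rdiv. ring. }
  replace (k / sqrt (k ^ 2 + m ^ 2) - nn m * sin k / sqrt (1 - (nn m * cos k) ^ 2))
    with (minus (k / sqrt (k ^ 2 + m ^ 2)) (nn m * sin k / sqrt (1 - (nn m * cos k) ^ 2))).
  2:{ unfold minus, plus, opp; simpl. ring. }
  apply (is_derive_minus _ _ _ _ _ h1 h2).
Qed.
Lemma sq_le a b : 0 <= a -> 0 <= b -> a^2 <= b^2 -> a <= b.
Proof. intros. nra. Qed.

Lemma alpha_dnn m k : 0 < m <= 1 -> 0 <= k <= PI ->
  0 <= k / sqrt (k^2 + m^2) - nn m * sin k / sqrt (1 - (nn m * cos k)^2).
Proof.
  intros hm hk. destruct (nn_facts m hm) as [hn0 [hn2 hn1]].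
  assert (hr := ncos_range m k hm).
  set (n := nn m) in *. set (s := sin k). set (c := cos k).
  assert (hsc : s^2 + c^2 = 1) by (unfold s, c; rewrite <- (sin2_cos2 k); unfold Rsqr; ring).
  assert (hs0 : 0 <= s) by (apply sin_ge_0; lra).
  assert (hsk : s <= k).
  { destruct (Req_dec k 0) as [e|ne]. unfold s; rewrite e, sin_0; lra.
    left; apply sin_lt_x; lra. }
  assert (hD : 0 < k^2 + m^2) by nra.
  assert (hS : 0 < 1 - (n*c)^2) by nra.
  assert (hsD := sqrt_lt_R0 _ hD). assert (hsS := sqrt_lt_R0 _ hS).
  assert (eD := pow2_sqrt _ (Rlt_le _ _ hD)). assert (eS := pow2_sqrt _ (Rlt_le _ _ hS)).
  set (sD := sqrt (k^2+m^2)) in *. set (sS := sqrt (1 - (n*c)^2)) in *.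
  assert (key : n * s * sD <= k * sS).
  { apply sq_le. apply Rmult_le_pos; [apply Rmult_le_pos|]; lra. nra.
    replace ((n*s*sD)^2) with (n^2*s^2*sD^2) by ring.
    replace ((k*sS)^2) with (k^2*sS^2) by ring. rewrite eD, eS.
    assert (n^2 * s^2 <= s^2) by nra.
    assert (s^2 <= k^2) by nra.
    assert (id : k^2*(1-(n*c)^2) - n^2*s^2*(k^2+m^2) = m^2*(k^2 - n^2*s^2)).
    { replace ((n*c)^2) with (n^2*c^2) by ring. replace (c^2) with (1-s^2) by lra.
      rewrite hn2. ring. }
    assert (0 <= m^2*(k^2 - n^2*s^2)) by (apply Rmult_le_pos; nra).
    lra. }
  assert (e : k / sD - n * s / sS = (k * sS - n * s * sD) / (sD * sS)) by (field; lra).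
  rewrite e. apply Rdiv_le_0_compat; nra.
Qed.

Definition theta (m k : R) := atan (k / m) - atan (nn m * sin k / m).
Definition dtheta (m k : R) :=
  m / (m^2 + k^2) - m * nn m * cos k / (m^2 + (nn m * sin k)^2).

Lemma theta_deriv m k : 0 < m <= 1 -> is_derive (theta m) k (dtheta m k).
Proof.
  intros hm. unfold theta, dtheta.
  auto_derive; auto.
  assert (0 < m^2 + k^2) by nra.
  assert (0 <= (nn m * sin k)^2) by nra.
  field. repeat split; try lra; nra.
Qed.

Lemma dtheta_nn m k : 0 < m <= 1 -> 0 <= k < PI -> 0 <= dtheta m k.
Proof.
  intros hm hk. unfold dtheta. destruct (nn_facts m hm) as [hn0 [hn2 hn1]].
  set (n := nn m) in *.
  assert (hsc : sin k ^2 + cos k ^2 = 1) by (rewrite <- (sin2_cos2 k); unfold Rsqr; ring).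
  assert (hD : 0 < m^2 + k^2) by nra.
  assert (hS : 0 < m^2 + (n * sin k)^2) by nra.
  destruct (Rle_dec (cos k) 0) as [hc|hc].
  - assert (0 <= - (m * n * cos k / (m^2 + (n*sin k)^2))).
    { replace (- (m * n * cos k / (m^2 + (n*sin k)^2))) with ((m * n * (- cos k)) / (m^2 + (n*sin k)^2)) by (field; lra).
      apply Rdiv_le_0_compat; [|lra].
      assert (0 <= m * n) by nra. nra. }
    assert (0 <= m / (m^2+k^2)) by (apply Rdiv_le_0_compat; lra).
    lra.
  - assert (hk2 : k <= PI/2).
    { destruct (Rle_dec k (PI/2)); auto.
      assert (cos k < 0) by (apply cos_lt_0; lra). lra. }
    assert (hkey := key_ineq k ltac:(lra) hk2).
    set (c := cos k) in *. set (s := sin k) in *.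
    assert (ineq : n * c * (m^2 + k^2) <= m^2 + (n*s)^2).
    { assert (h1 : n * c * k^2 <= n * s^2) by (rewrite Rmult_assoc; apply Rmult_le_compat_l; lra).
      assert (h2 : n*c*(n+1-c) <= 1).
      { assert (c <= 1) by (unfold c; apply COS_bound).
        assert (n*c*(n+1-c) <= c*(n+1-c)) by (apply Rmult_le_compat_r; nra).
        nra. }
      assert (id : m^2 + n^2*s^2 - n*s^2 - n*c*m^2 = (1-n)*(1 - n*c*(n+1-c))).
      { replace (m^2) with (1 - n^2) by lra. replace (s^2) with (1 - c^2) by lra. ring. }
      assert (0 <= (1-n)*(1 - n*c*(n+1-c))) by (apply Rmult_le_pos; lra).
      nra. }
    assert (e : m / (m^2+k^2) - m * n * c / (m^2 + (n*s)^2)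
              = m * (m^2 + (n*s)^2 - n * c * (m^2+k^2)) / ((m^2+k^2) * (m^2 + (n*s)^2))).
    { field. lra. }
    rewrite e. apply Rdiv_le_0_compat; [apply Rmult_le_pos; lra| nra].
Qed.

Lemma sqrt_eq x y : 0 <= y -> y^2 = x -> sqrt x = y.
Proof. intros h e. subst. replace (y^2) with (y*y) by ring. apply sqrt_square; auto. Qed.

Lemma beta_theta m k : 0 < m <= 1 -> beta k m = / 2 * (1 - cos (theta m k)).
Proof.
  intros hm. destruct (nn_facts m hm) as [hn0 [hn2 hn1]].
  assert (hr := ncos_range m k hm).
  assert (hsc : sin k ^2 + cos k ^2 = 1) by (rewrite <- (sin2_cos2 k); unfold Rsqr; ring).
  unfold beta, vel, velD, omega, theta.
  rewrite sin_acos by lra. rewrite cos_minus, !cos_atan, !sin_atan.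
  set (n := nn m) in *. set (s := sin k) in *. set (c := cos k) in *.
  assert (hD : 0 < k^2 + m^2) by nra.
  assert (hS : 0 < 1 - (n*c)^2) by nra.
  assert (hsD := sqrt_lt_R0 _ hD). assert (hsS := sqrt_lt_R0 _ hS).
  assert (eD := pow2_sqrt _ (Rlt_le _ _ hD)). assert (eS := pow2_sqrt _ (Rlt_le _ _ hS)).
  replace ((n*c)²) with ((n*c)^2) by (unfold Rsqr; ring).
  set (sD := sqrt (k^2+m^2)) in *. set (sS := sqrt (1 - (n*c)^2)) in *.
  assert (idS : 1 - (n*c)^2 = m^2 + n^2*s^2).
  { replace (m^2) with (1-n^2) by lra. replace ((n*c)^2) with (n^2 * c^2) by ring.
    replace (c^2) with (1-s^2) by lra. ring. }
  assert (e1 : sqrt (1 + (k/m)²) = sD / m).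
  { apply sqrt_eq. apply Rdiv_le_0_compat; lra. unfold Rsqr.
    replace ((sD/m)^2) with (sD^2/m^2) by (field; lra). rewrite eD. field. lra. }
  assert (e2 : sqrt (1 + (n*s/m)²) = sS / m).
  { apply sqrt_eq. apply Rdiv_le_0_compat; lra. unfold Rsqr.
    replace ((sS/m)^2) with (sS^2/m^2) by (field; lra). rewrite eS, idS. field. lra. }
  rewrite e1, e2.
  assert (e3 : sqrt ((1 - (n*s/sS)^2) * (1 - (k/sD)^2)) = m^2 / (sS * sD)).
  { apply sqrt_eq. apply Rdiv_le_0_compat; nra.
    replace ((n*s/sS)^2) with (n^2*s^2/sS^2) by (field; lra).
    replace ((k/sD)^2) with (k^2/sD^2) by (field; lra).
    replace ((m^2/(sS*sD))^2) with (m^2 * m^2 / (sS^2 * sD^2)) by (field; lra).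
    rewrite eD, eS, idS. field. split; lra. }
  rewrite e3. field. repeat split; lra.
Qed.

Theorem lemma2 (kbar : R) (hk0 : 0 <= kbar) (hk1 : kbar < PI)
  (m : R) (hm0 : 0 <= m) (hm1 : m <= 1) :
  IsMaxOn (fun k => - kbar <= k <= kbar) (fun k => Rabs (alpha k m))
          (Rmax (Rabs (alpha 0 m)) (Rabs (alpha kbar m)))
  /\
  IsMaxOn (fun k => - kbar <= k <= kbar) (fun k => Rabs (beta k m))
          (Rmax (Rabs (beta 0 m)) (Rabs (beta kbar m))).
Proof.
  destruct (Req_dec m 0) as [e|ne].
  - subst m. split.
    + apply (final (fun k => alpha k 0)); auto. intros; apply alpha_even.
      intros x y hx hxy hy. rewrite !alpha_m0 by lra. lra.
    + apply (final (fun k => beta k 0)); auto. intros; apply beta_even.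
      intros x y hx hxy hy. rewrite !beta_m0 by lra. lra.
  - assert (hm : 0 < m <= 1) by lra. split.
    + apply (final (fun k => alpha k m)); auto. intros; apply alpha_even.
      apply (mono_deriv (fun k => alpha k m)
        (fun k => k / sqrt (k^2 + m^2) - nn m * sin k / sqrt (1 - (nn m * cos k)^2)) 0 kbar).
      * intros; apply alpha_deriv; auto.
      * intros; apply alpha_dnn; auto; lra.
    + apply (final (fun k => beta k m)); auto. intros; apply beta_even.
      intros x y hx hxy hy. rewrite !beta_theta by auto.
      assert (hmono := mono_deriv (theta m) (dtheta m) 0 kbar
        (fun k _ => theta_deriv m k hm) (fun k hk => dtheta_nn m k hm ltac:(lra))).
      assert (h0 : theta m 0 = 0).
      { unfold theta. rewrite sin_0. replace (0/m) with 0 by (field; lra).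
        replace (nn m * 0 / m) with 0 by (field; lra). rewrite atan_0. ring. }
      assert (hb : forall k, theta m k < PI).
      { intros k. unfold theta. assert (h1 := atan_bound (k/m)).
        assert (h2 := atan_bound (nn m * sin k / m)). lra. }
      assert (hx0 : 0 <= theta m x) by (rewrite <- h0; apply hmono; lra).
      assert (hxy' : theta m x <= theta m y) by (apply hmono; lra).
      assert (cos (theta m y) <= cos (theta m x)).
      { apply cos_decr_1; try lra; left; apply hb. }
      lra.
Qed.
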